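(* Let $G=(V,E)$ be a connected undirected graph with positive edge weights $w$, and run the distributed algorithm described in the context synchronously at every node. Then for every node $v\in V$ and every node $t\in V$, at any time after the first $\mathcal{D}(G)+1$ phases have been completed, the variable $S[v,t]$ at $v$ equals $\sigma_{v,t}$.
   Context: Graph notions. $G=(V,E)$ is connected, undirected, with weights $w(e)>0$; $N(v)$ is the set of neighbors of $v$ and $N[v]=N(v)\cup\{v\}$. The length of a path is the sum of its edge weights; $\mathrm{dist}(s,t)$ is the length of a shortest $s$–$t$ path. For $s\neq t$, $\mathrm{maxhop}(s,t)$ is the maximum number of edges of a shortest (minimum-length) $s$–$t$ path, $\mathrm{maxhop}(s,s)=0$, and $\mathcal{D}(G)=\max_{s,t\in V}\mathrm{maxhop}(s,t)$. $\sigma_{s,t}$ is the number of shortest $s$–$t$ paths, with $\sigma_{s,s}=1$. Algorithm (at each node $v$). Initialization: for all $t\in V$: $D[t]=+\infty$, $\mathrm{NH}[t]=\mathrm{PH}[t]=\emptyset$, and for all $u\in N[v]$: $B[u,t]=0$, $S[u,t]=0$; then $S[v,v]=1$, $D[v]=0$. Execution proceeds in synchronous phases; in each phase every node $v$ sends, for every $t\in V$, the message $(t,D[t],S[v,t],B[v,t])$ to every neighbor, receives all messages sent to it by its neighbors in that phase, and processes each of them (in arbitrary order) as follows. On receipt of $(t,d,s,b)$ from $u\in N(v)$: remove $u$ from $\mathrm{NH}[t]$ and from $\mathrm{PH}[t]$; if $d+w(\{u,v\})<D[t]$ set $D[t]\leftarrow d+w(\{u,v\})$; else if $d+w(\{u,v\})=D[t]$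 add $u$ to $\mathrm{NH}[t]$; else if $d-w(\{u,v\})=D[t]$ add $u$ to $\mathrm{PH}[t]$. Then set $S[u,t]\leftarrow s$, $B[u,t]\leftarrow b$; if $t\neq v$ set $S[v,t]\leftarrow\sum_{x\in\mathrm{NH}[t]}S[x,t]$; set $B[v,t]\leftarrow S[v,t]\cdot\sum_{x\in\mathrm{PH}[t]}\frac{B[x,t]+1}{S[x,t]}$ (a term with $S[x,t]=0$ is taken as $0$); finally set $C\leftarrow\sum_{x\neq v}B[v,x]$. *)

(* Defs.v *)
From HB Require Import structures.
From mathcomp Require Import all_boot all_order all_algebra.
Set Implicit Arguments. Unset Strict Implicit. Unset Printing Implicit Defensive.
Import Order.TTheory GRing.Theory Num.Theory.
Local Open Scope ring_scope.

Section Graph.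
Variables (V : finType) (R : realFieldType).
Variables (adj : rel V) (w : V -> V -> R).

Definition weighted_graph : Prop :=
  [/\ irreflexive adj, symmetric adj,
      (forall u v, w u v = w v u),
      (forall u v, adj u v -> 0 < w u v) &
      (forall s t, connect adj s t)].

Fixpoint plen (s : V) (p : seq V) : R :=
  if p is x :: q then w s x + plen x q else 0.

(* p is a (simple) path s = v0, v1, ..., vk = t, encoded by [:: v1; ...; vk] *)
Definition spath (s t : V) (p : seq V) : bool :=
  [&& path adj s p, last s p == t & uniq (s :: p)].

Fixpoint allseqs (n : nat) : seq (seq V) :=
  if n is n'.+1 then [::] :: [seq x :: q | x <- enum V, q <- allseqs n']
  else [:: [::]].

(* the (finite, duplicate-free) list of all simple s-t paths;
   a simple path has at most #|V| - 1 edges *)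
Definition spaths (s t : V) : seq (seq V) :=
  undup [seq p <- allseqs #|V| | spath s t p].

Definition shortest (s t : V) (p : seq V) : bool :=
  spath s t p && all (fun q => plen s p <= plen s q) (spaths s t).

Definition sigma (s t : V) : nat :=
  count (fun p => shortest s t p) (spaths s t).

Definition maxhop (s t : V) : nat :=
  \max_(p <- spaths s t | shortest s t p) size p.

Definition hopdiam : nat := \max_(st : V * V) maxhop st.1 st.2.

(* extended reals for D[t]: None stands for +infinity *)
Definition xadd (d : option R) (c : R) : option R := omap (fun x => x + c) d.
Definition xsub (d : option R) (c : R) : option R := omap (fun x => x - c) d.
Definition xlt (a b : option R) : bool :=
  match a, b with
  | Some x, Some y => x < y
  | Some _, None => true
  | None, _ => false
  end.

(* local state at a node v: D, NH, PH, S[u,t], B[u,t] (for u in N[v]), C *)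
Record state := State {
  Dv : V -> option R;
  NH : V -> {set V};
  PH : V -> {set V};
  Sv : V -> V -> R;
  Bv : V -> V -> R;
  Cv : R }.

Definition init (v : V) : state :=
  State (fun t => if t == v then Some 0 else None)
        (fun _ => set0) (fun _ => set0)
        (fun u t => if (u == v) && (t == v) then 1 else 0)
        (fun _ _ => 0) 0.

Definition upd1 (f : V -> option R) (t : V) (x : option R) : V -> option R :=
  fun y => if y == t then x else f y.
Definition upds (f : V -> {set V}) (t : V) (x : {set V}) : V -> {set V} :=
  fun y => if y == t then x else f y.
Definition upd2 (f : V -> V -> R) (u t : V) (x : R) : V -> V -> R :=
  fun a b => if (a == u) && (b == t) then x else f a b.

Definition process (v : V) (st : state) (u t : V) (d : option R) (s b : R)
  : state :=
  let nh0 := NH st t :\ u in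
  let ph0 := PH st t :\ u in
  let dw := xadd d (w u v) in
  let '(D1, nh1, ph1) :=
    if xlt dw (Dv st t) then (upd1 (Dv st) t dw, nh0, ph0)
    else if dw == Dv st t then (Dv st, u |: nh0, ph0)
    else if xsub d (w u v) == Dv st t then (Dv st, nh0, u |: ph0)
    else (Dv st, nh0, ph0) in
  let S1 := upd2 (Sv st) u t s in
  let B1 := upd2 (Bv st) u t b in
  let S2 := if t != v then upd2 S1 v t (\sum_(x in nh1) S1 x t) else S1 in
  let B2 := upd2 B1 v t
     (S2 v t * \sum_(x in ph1)
                 (if S2 x t == 0 then 0 else (B1 x t + 1) / S2 x t)) in
  State D1 (upds (NH st) t nh1) (upds (PH st) t ph1) S2 B2
        (\sum_(x | x != v) B2 v x).

Definition inbox (v : V) : seq (V * V) := [seq p <- enum {: V * V} | adj v p.1].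

(* a schedule fixes, for each phase k and each node v, the (arbitrary) order
   in which v processes the messages it receives in phase k+1 *)
Definition valid_schedule (sched : nat -> V -> seq (V * V)) : Prop :=
  forall k v, perm_eq (sched k v) (inbox v).

(* v processes the list of messages ms, sent by the nodes in global state sys *)
Definition process_msgs (sys : V -> state) (v : V) (st : state)
  (ms : seq (V * V)) : state :=
  foldl (fun st' p =>
           process v st' p.1 p.2 (Dv (sys p.1) p.2) (Sv (sys p.1) p.1 p.2)
                   (Bv (sys p.1) p.1 p.2)) st ms.

Fixpoint run (sched : nat -> V -> seq (V * V)) (k : nat) : V -> state :=
  if k is k'.+1 then
    let sys := run sched k' in fun v => process_msgs sys v (sys v) (sched k' v)
  else init.

(* state of v during phase k+1, after it has processed its first j messages
   (j = 0: after k phases; j >= size of the inbox: after k+1 phases) *)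
Definition state_at (sched : nat -> V -> seq (V * V)) (k j : nat) (v : V)
  : state :=
  let sys := run sched k in process_msgs sys v (sys v) (take j (sched k v)).

End Graph.

(* Main.v *)
Require Import Defs.
From HB Require Import structures.
From mathcomp Require Import all_boot all_order all_algebra.
From mathcomp Require Import lra.
Import Order.TTheory GRing.Theory Num.Theory.
Local Open Scope ring_scope.
Set Implicit Arguments. Unset Strict Implicit. Unset Printing Implicit Defensive.

Section Comb.
Variables (V : finType) (R : realFieldType) (adj : rel V) (w : V -> V -> R).
Hypothesis G : weighted_graph adj w.

Let irr : irreflexive adj. Proof. by case: G. Qed.
Let asym : symmetric adj. Proof. by case: G. Qed.
Let wsym u v : w u v = w v u. Proof. by case: G. Qed.
Let wpos u v : adj u v -> 0 < w u v. Proof. by case: G => _ _ _ H _; apply: H. Qed.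
Let conn s t : connect adj s t. Proof. by case: G. Qed.

Local Notation plen := (plen w).
Local Notation spath := (spath adj).

Lemma plen_cat x p1 p2 : plen x (p1 ++ p2) = plen x p1 + plen (last x p1) p2.
Proof. by elim: p1 x => [|y p IH] x /=; rewrite ?add0r // IH addrA. Qed.

Lemma plen_ge0 x p : path adj x p -> 0 <= plen x p.
Proof.
elim: p x => [|y p IH] x //= /andP[axy pp].
by rewrite addr_ge0 ?IH // ltW // wpos.
Qed.

Lemma plen_gt0 x p : path adj x p -> p != [::] -> 0 < plen x p.
Proof.
case: p => [|y p] //= /andP[axy pp] _.
by rewrite ltr_wpDr ?plen_ge0 // wpos.
Qed.

Lemma suffix_short x p v : path adj x p -> uniq (x :: p) -> v \in p ->
  exists q, [/\ path adj v q, uniq (v :: q), last v q = last x p &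
                plen v q < plen x p].
Proof.
move=> pp up vp; case/splitPr: vp pp up => p1 p2.
rewrite -cat_rcons cat_path last_cat last_rcons => /andP[pp1 pp2] up.

exists p2; split => //.
- by move: up; rewrite cat_rcons /= cat_uniq => /andP[_ /and3P[]].
- rewrite plen_cat last_rcons ltrDr plen_gt0 //.
  by case: (p1).
Qed.

Lemma mem_allseqs n p : (size p <= n)%N -> p \in allseqs V n.
Proof.
elim: n p => [|n IH] [|x p] //= hs.
rewrite inE; apply/orP; right.
by apply: (allpairs_f (fun x q => x :: q)); rewrite ?mem_enum // IH.
Qed.

Lemma mem_spaths s t p : (p \in spaths adj s t) = spath s t p.
Proof.
rewrite /spaths mem_undup mem_filter andb_idr // => /and3P[_ _ u].
apply: mem_allseqs.
have := max_card (mem (s :: p)); rewrite (card_uniqP u) /=.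
by move=> /ltnW.
Qed.

Lemma uniq_spaths s t : uniq (spaths adj s t).
Proof. exact: undup_uniq. Qed.

Lemma ex_spath s t : exists p, spath s t p.
Proof.
have /connectP [p pp ->] := conn s t.
case: (shortenP pp) => q pq uq _.
by exists q; rewrite /spath pq uq eqxx.
Qed.

Lemma ex_min (T : eqType) (f : T -> R) (s : seq T) : s != [::] ->
  exists2 x, x \in s & all (fun y => f x <= f y) s.
Proof.
elim: s => [|a s IH] // _.
case: (eqVneq s [::]) => [->|ne].
  by exists a; rewrite ?mem_head //= lexx.
have [x xs ax] := IH ne.
case: (leP (f a) (f x)) => h.
- exists a; rewrite ?mem_head //= lexx /=.
  by apply/allP => y ys; apply: le_trans h (allP ax y ys).
- exists x; rewrite ?inE ?xs ?orbT //= ltW //.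
Qed.

Lemma ex_shortest s t : exists p, shortest adj w s t p.
Proof.
have [p0 sp0] := ex_spath s t.
have ne : spaths adj s t != [::].
  by apply/eqP => e; move: (mem_spaths s t p0); rewrite e sp0.
have [p ps ap] := ex_min (plen s) ne.
by exists p; rewrite /shortest -mem_spaths ps.
Qed.

Definition dist s t := plen s (xchoose (ex_shortest s t)).

Lemma dist_le s t p : spath s t p -> dist s t <= plen s p.
Proof.
move=> sp; have /andP[_ /allP] := xchooseP (ex_shortest s t).
by apply; rewrite mem_spaths.
Qed.

Lemma shortestP s t p :
  shortest adj w s t p = spath s t p && (plen s p == dist s t).
Proof.
apply/idP/idP.
- move=> /[dup] sh /andP[sp /allP al]; rewrite sp eq_le dist_le // andbT.
  have /andP[sp' _] := xchooseP (ex_shortest s t).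
  by apply: al; rewrite mem_spaths.
- move=> /andP[sp /eqP e]; rewrite /shortest sp /=; apply/allP => q.
  by rewrite mem_spaths e; apply: dist_le.
Qed.

Lemma dist_ge0 s t : 0 <= dist s t.
Proof.
have /andP[/and3P[pp _ _] _] := xchooseP (ex_shortest s t).
exact: plen_ge0.
Qed.

Lemma dist_self v : dist v v = 0.
Proof.
apply/eqP; rewrite eq_le dist_ge0 andbT.
by have := @dist_le v v [::]; apply; rewrite /spath /= eqxx.
Qed.

Lemma dist_tri v u t : adj v u -> dist v t <= w u v + dist u t.
Proof.
move=> avu; have /andP[/and3P[pp /eqP lp up] _] := xchooseP (ex_shortest u t).
set q := xchoose _ in pp lp up *.
have -> : dist u t = plen u q by [].
case vq: (v \in u :: q).
- move: vq; rewrite inE => /orP[/eqP vu|vq].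
    by move: avu; rewrite vu irr.
  have [r [pr ur lr ltr]] := suffix_short pp up vq.
  have h : dist v t <= plen v r by apply: dist_le; rewrite /spath pr ur lr lp eqxx.
  apply: le_trans h _; apply: le_trans (ltW ltr) _.
  by rewrite lerDr; apply/ltW/wpos; rewrite asym.
- have h : dist v t <= plen v (u :: q).
    by apply: dist_le; rewrite /spath /= avu pp lp eqxx /= vq; move: up => /= ->.
  by rewrite /= wsym in h.
Qed.

Definition isp t v x := adj v x && (dist x t + w x v == dist v t).

Lemma shortest_cons v t p : v != t ->
  shortest adj w v t p =
  if p is x :: q then isp t v x && shortest adj w x t q else false.
Proof.
move=> vt; case: p => [|x q].
  by rewrite shortestP /spath /= (negbTE vt).
rewrite !shortestP /spath /isp /=.
apply/idP/idP.
- move=> /andP[/and3P[/andP[avx pq] lq /andP[vq uq]] /eqP e].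
  have h1 : dist x t <= plen x q by apply: dist_le; rewrite /spath pq lq /= uq.
  have h2 := dist_tri t avx.
  rewrite wsym in e.
  have eq1 : plen x q = dist x t.
    apply/eqP; rewrite eq_le h1 andbT.
    by rewrite -(lerD2l (w x v)) e.
  rewrite avx pq lq /=; move: uq => /= ->.
  by rewrite eq1 eqxx -e eq1 addrC eqxx.
- move=> /and3P[/andP[avx /eqP e] /and4P[pq lq xq uq] /eqP e2].
  have uxq : uniq (x :: q) by rewrite /= xq uq.
  rewrite avx pq lq xq uq e2 wsym addrC e eqxx !andbT /=.
  apply/negP; rewrite inE => /orP[/eqP vx | vq].
    by move: avx; rewrite vx irr.
  have [r [pr ur lr ltr]] := suffix_short pq uxq vq.
  have h : dist v t <= plen v r by apply: dist_le; rewrite /spath pr ur lr lq.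
  have wp : 0 < w x v by rewrite wpos // asym.
  rewrite e2 -e in ltr h; lra.
Qed.

Lemma count_uniq_eq (T : eqType) (P : pred T) s1 s2 : uniq s1 -> uniq s2 ->
  (forall x, P x -> (x \in s1) = (x \in s2)) -> count P s1 = count P s2.
Proof.
move=> u1 u2 e; rewrite -!size_filter; apply: perm_size.
apply: uniq_perm; rewrite ?filter_uniq // => x; rewrite !mem_filter.
by case Px: (P x) => //=; apply: e.
Qed.

Lemma sigma_self v : sigma adj w v v = 1%N.
Proof.
rewrite /sigma (@count_uniq_eq _ _ _ [:: [::]]) ?uniq_spaths //=.
  by rewrite shortestP /spath /= eqxx dist_self eqxx.
move=> p; rewrite mem_spaths inE shortestP => /andP[sp _].
rewrite sp; case: p sp => [|x p] //; rewrite /spath => /and3P[_ /eqP lp up].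
have : v \in x :: p by rewrite -[X in X \in _]lp /= mem_last.
by move: up => /= /andP[/negP].
Qed.

Lemma sigma_rec v t : v != t ->
  sigma adj w v t = (\sum_(x | isp t v x) sigma adj w x t)%N.
Proof.
move=> vt.
pose L := [seq x :: q | x <- enum (isp t v), q <- [seq q <- spaths adj x t | shortest adj w x t q]].
have uL : uniq L.
  apply: allpairs_uniq_dep; first exact: enum_uniq.
    by move=> x _; rewrite filter_uniq ?uniq_spaths.
  move=> [x1 q1] [x2 q2] _ _ /= [e1 e2]; subst; by [].
have memL p : (p \in L) = shortest adj w v t p.
  rewrite (shortest_cons _ vt); apply/allpairsPdep/idP.
    move=> [x [q [xs qs ->]]]; rewrite mem_enum in xs; rewrite mem_filter in qs.
    by apply/andP; split => //; case/andP: qs.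
  case: p => [|x q] // /andP[ix sq]; exists x, q; split.
  - by rewrite mem_enum; exact: ix.
  - by rewrite mem_filter sq mem_spaths; case/andP: sq.
  - by [].
rewrite /sigma (@count_uniq_eq _ _ _ L) ?uniq_spaths //; last first.
  by move=> p sp; rewrite memL sp mem_spaths; case/andP: sp.
rewrite (@eq_in_count _ _ predT); last by move=> p; rewrite memL.
rewrite count_predT size_allpairs_dep sumnE big_map big_enum /=.
by apply: eq_bigr => x _; rewrite size_filter.
Qed.

Lemma maxhop_ge s t p : shortest adj w s t p -> (size p <= maxhop adj w s t)%N.
Proof.
move=> sh; apply: (leq_bigmax_seq p) => //.
by rewrite mem_spaths; case/andP: sh.
Qed.

Lemma maxhop_pred v t x : v != t -> isp t v x -> (maxhop adj w x t < maxhop adj w v t)%N.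
Proof.
move=> vt ix.
have h q : shortest adj w x t q -> (size q < maxhop adj w v t)%N.
  move=> sq; have : shortest adj w v t (x :: q) by rewrite shortest_cons // ix sq.
  by move/maxhop_ge.
have [q0 sq0] := ex_shortest x t.
have pos := h q0 sq0.
have : (maxhop adj w x t <= (maxhop adj w v t).-1)%N.
  apply/bigmax_leqP_seq => q _ sq; have := h q sq.
  by case: (maxhop adj w v t) pos.
by case: (maxhop adj w v t) pos.
Qed.

Lemma maxhop_diam s t : (maxhop adj w s t <= hopdiam adj w)%N.
Proof. exact: (leq_bigmax (s, t)). Qed.

End Comb.
Section Spec.
Variables (V : finType) (R : realFieldType) (w : V -> V -> R).

Definition newD (D dw : option R) := if xlt dw D then dw else D.
Definition newNH (D dw : option R) (u : V) (N : {set V}) :=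
  if ~~ xlt dw D && (dw == D) then u |: (N :\ u) else N :\ u.

Lemma process_D v st u t d s b t' :
  Dv (process w v st u t d s b) t' =
  if t' == t then newD (Dv st t) (xadd d (w u v)) else Dv st t'.
Proof.
rewrite /process /newD; case: ifP => h1 /=; first by rewrite /upd1.
by case: ifP => h2 /=; [|case: ifP => h3 /=]; case: eqP => // ->.
Qed.

Lemma process_NH v st u t d s b t' :
  NH (process w v st u t d s b) t' =
  if t' == t then newNH (Dv st t) (xadd d (w u v)) u (NH st t) else NH st t'.
Proof.
rewrite /process /newNH; case: ifP => h1 /=; first by rewrite /upds.
by case: ifP => h2 /=; [|case: ifP => h3 /=]; rewrite /upds.
Qed.

Lemma process_S v st u t d s b :
  Sv (process w v st u t d s b) =
  let nh1 := newNH (Dv st t) (xadd d (w u v)) u (NH st t) in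
  let S1 := upd2 (Sv st) u t s in
  if t != v then upd2 S1 v t (\sum_(x in nh1) S1 x t) else S1.
Proof.
rewrite /process /newNH; case: ifP => h1 /=; first by [].
by case: ifP => h2 /=; [|case: ifP => h3 /=].
Qed.

End Spec.

Section Alg.
Variables (V : finType) (R : realFieldType) (adj : rel V) (w : V -> V -> R).
Hypothesis G : weighted_graph adj w.

Let irr : irreflexive adj. Proof. by case: G. Qed.
Let asym : symmetric adj. Proof. by case: G. Qed.
Let wsym u v : w u v = w v u. Proof. by case: G. Qed.
Let wpos u v : adj u v -> 0 < w u v. Proof. by case: G => _ _ _ H _; apply: H. Qed.

Local Notation dist := (dist G).
Local Notation isp := (isp G).

Definition Jv v (st : state V R) :=
 [/\ forall t x, x \in NH st t -> adj v x,
     forall t, t != v -> Sv st v t = \sum_(x in NH st t) Sv st x t,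
     Sv st v v = 1 &
     forall t d, Dv st t = Some d -> dist v t <= d].

Lemma newNH_adj v (D dw : option R) u (N : {set V}) x : adj v u -> (forall y, y \in N -> adj v y) ->
  x \in newNH D dw u N -> adj v x.
Proof.
move=> avu hN; rewrite /newNH; case: ifP => _; rewrite ?inE.
  by case/orP => [/eqP -> //| /andP[_ /hN]].
by case/andP => _ /hN.
Qed.

Lemma process_J v st u t d s b : Jv v st -> adj v u ->
  (forall d', d = Some d' -> dist u t <= d') ->
  Jv v (process w v st u t d s b).
Proof.
move=> [J1 J2 J3 J4] avu hd.
have uv : u != v by apply/eqP => e; move: avu; rewrite e irr.
have J1' : forall t' x, x \in NH (process w v st u t d s b) t' -> adj v x.
  move=> t' x; rewrite process_NH; case: eqP => _; last exact: J1.
  by apply: newNH_adj => //; apply: J1.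
split => //.
- move=> t' t'v; rewrite process_S process_NH /=.
  case: (eqVneq t' t) => [et|nt]; first subst t'.
    rewrite t'v /upd2 !eqxx !andbT /=.
    apply: eq_bigr => x xin.
    have axv : adj v x by apply: newNH_adj xin => //; apply: J1.
    have -> : (x == v) = false by apply/eqP => e; move: axv; rewrite e irr.
    by [].
  have hS a : (if t != v then upd2 (upd2 (Sv st) u t s) v t
                 (\sum_(x in newNH (Dv st t) (xadd d (w u v)) u (NH st t))
                   upd2 (Sv st) u t s x t) else upd2 (Sv st) u t s) a t' = Sv st a t'.
    by case: ifP => _; rewrite /upd2 (negbTE nt) !andbF.
  rewrite hS; under eq_bigr do rewrite hS.
  exact: J2.
- rewrite process_S /=; case: ifP => tv; rewrite /upd2.
    by rewrite eqxx eq_sym (negbTE tv) /= eq_sym (negbTE uv) /= J3.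
  by rewrite eq_sym (negbTE uv) /= J3.
- move=> t' d'; rewrite process_D; case: eqP => [->|_]; last exact: J4.
  rewrite /newD; case: ifP => _; last exact: J4.
  clear J1'; case: d hd => [d0|] //= hd [<-].
  have := dist_tri G t avu; have := hd d0 erefl; lra.
Qed.

Definition dle (a b : option R) :=
  match b with None => true | Some y => if a is Some x then x <= y else false end.

Lemma dle_refl a : dle a a.
Proof. by case: a => //= x. Qed.

Lemma dle_trans a b c : dle a b -> dle b c -> dle a c.
Proof.
case: c => //= z; case: b => //= y; case: a => //= x.
exact: le_trans.
Qed.

Lemma newD_mono D dw : dle (newD D dw) D.
Proof.
rewrite /newD; case: ifP => h; last exact: dle_refl.
by case: D h => [y|] //=; case: dw => [x|] //= /ltW.
Qed.

Lemma newD_msg D dw : dle (newD D dw) dw.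
Proof.
rewrite /newD; case: ifP => h; first exact: dle_refl.
case: dw h => [x|] //=; case: D => [y|] //= /negbT.
by rewrite -leNgt.
Qed.

Lemma process_Dmono v st u t d s b t' :
  dle (Dv (process w v st u t d s b) t') (Dv st t').
Proof.
rewrite process_D; case: eqP => [->|_]; [exact: newD_mono | exact: dle_refl].
Qed.

Lemma process_Dmsg v st u t d s b :
  dle (Dv (process w v st u t d s b) t) (xadd d (w u v)).
Proof. by rewrite process_D eqxx; exact: newD_msg. Qed.

Lemma process_NHmem v st u t d s b x t' : ~~ ((x == u) && (t' == t)) ->
  (x \in NH (process w v st u t d s b) t') = (x \in NH st t').
Proof.
rewrite process_NH; case: (eqVneq t' t) => [->|//]; rewrite andbT => xu.
by rewrite /newNH; case: ifP => _; rewrite !inE (negbTE xu).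
Qed.

Lemma process_Sother v st u t d s b x t' : x != v ->
  Sv (process w v st u t d s b) x t' =
  if (x == u) && (t' == t) then s else Sv st x t'.
Proof.
move=> xv; rewrite process_S /=; case: ifP => _ //.
by rewrite {1}/upd2 (negbTE xv).
Qed.

Lemma process_correct v st u t d s b :
  Dv st t = Some (dist v t) -> adj v u ->
  (forall d', d = Some d' -> dist u t <= d') ->
  (isp t v u -> d = Some (dist u t)) ->
  Dv (process w v st u t d s b) t = Some (dist v t) /\
  (u \in NH (process w v st u t d s b) t) = isp t v u.
Proof.
move=> Dst avu hd hisp.
have tri := dist_tri G t avu.
have key : (xadd d (w u v) == Some (dist v t)) = isp t v u.
  rewrite /isp avu /=; apply/idP/idP.
    case: d hd {hisp} => [d0|] //= hd /eqP [e].
    have := hd d0 erefl; move: tri => h1 h2; apply/eqP; lra.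
  move=> h; rewrite hisp; last by rewrite /isp avu h.
  by rewrite /= (eqP h).
have nlt : ~~ xlt (xadd d (w u v)) (Dv st t).
  rewrite Dst; case: d hd {hisp key} => [d0|] //= hd.
  by rewrite -leNgt; have := hd d0 erefl; lra.
rewrite process_D process_NH eqxx /newD /newNH (negbTE nlt) /=; split => //.
rewrite Dst key; case: (isp t v u); rewrite !inE ?eqxx //.
Qed.

Local Notation pm := (process_msgs w).

Lemma pm_cons sys v st p ms : pm sys v st (p :: ms) =
  pm sys v (process w v st p.1 p.2 (Dv (sys p.1) p.2) (Sv (sys p.1) p.1 p.2)
              (Bv (sys p.1) p.1 p.2)) ms.
Proof. by []. Qed.

Definition InvD (sys : V -> state V R) :=
  forall u t d, Dv (sys u) t = Some d -> dist u t <= d.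

Lemma pm_J sys v st ms : Jv v st -> InvD sys -> (forall p, p \in ms -> adj v p.1) ->
  Jv v (pm sys v st ms).
Proof.
elim: ms st => [|p ms IH] st //= J ID hm.
apply: IH => [|//|q qm]; last by apply: hm; rewrite inE qm orbT.
apply: process_J => //; first by apply: hm; rewrite mem_head.
by move=> d' /ID.
Qed.

Lemma pm_Dmono sys v st ms t : dle (Dv (pm sys v st ms) t) (Dv st t).
Proof.
elim: ms st => [|p ms IH] st /=; first exact: dle_refl.
exact: dle_trans (IH _) (process_Dmono _ _ _ _ _ _ _ _).
Qed.

Lemma pm_Dmsg sys v st ms u t : (u, t) \in ms ->
  dle (Dv (pm sys v st ms) t) (xadd (Dv (sys u) t) (w u v)).
Proof.
elim: ms st => [|p ms IH] st //=; rewrite inE => /orP[/eqP <-|um]; last exact: IH.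
exact: dle_trans (pm_Dmono _ _ _ _ _) (process_Dmsg _ _ _ _ _ _ _).
Qed.

Lemma pm_NH sys v st ms t :
  Dv st t = Some (dist v t) -> InvD sys ->
  (forall x, isp t v x -> Dv (sys x) t = Some (dist x t)) ->
  (forall p, p \in ms -> adj v p.1) ->
  Dv (pm sys v st ms) t = Some (dist v t) /\
  forall x, (x \in NH (pm sys v st ms) t) =
            if (x, t) \in ms then isp t v x else x \in NH st t.
Proof.
move=> + ID hp; elim: ms st => [|p ms IH] st Dst hm //=.
case: p hm => u t' hm /=.
have avu : adj v u by apply: (hm (u, t')); rewrite mem_head.
set st1 := process _ _ _ _ _ _ _ _.
have D1 : Dv st1 t = Some (dist v t).
  case: (eqVneq t' t) => [et|nt].
    subst t'; apply: (proj1 (@process_correct v st u t _ _ _ Dst avu _ _)).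
      by move=> d' /ID.
    exact: hp.
  by rewrite /st1 process_D eq_sym (negbTE nt).
have [D2 N2] := IH st1 D1 (fun q qm => hm q (mem_behead (s := (u, t') :: ms) qm)).
split => // x; rewrite N2 inE.
case: ifP => xm; rewrite ?orbT // orbF.
case: (eqVneq (x, t) (u, t')) => [[ex et]|ne]; first subst x t'.
  rewrite /st1.
  have [_ ->] := @process_correct v st u t _ (Sv (sys u) u t) (Bv (sys u) u t) Dst avu (fun d' => ID u t d') (hp u).
  by [].
rewrite /st1 process_NHmem //.
Qed.

Lemma pm_S sys v st ms x t : x != v ->
  Sv (pm sys v st ms) x t = if (x, t) \in ms then Sv (sys x) x t else Sv st x t.
Proof.
move=> xv; elim: ms st => [|[u t'] ms IH] st //=.
rewrite IH inE; case: (boolP ((x, t) \in ms)) => xm; rewrite ?orbT // orbF.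
rewrite process_Sother //=.
case: (eqVneq (x, t) (u, t')) => [[ex et]|ne]; first by subst; rewrite !eqxx.
case: ifP => // /andP[/eqP e1 /eqP e2].
by move: ne; rewrite e1 e2 eqxx.
Qed.

Variable sched : nat -> V -> seq (V * V).
Hypothesis VS : valid_schedule adj sched.

Local Notation run := (run w sched).

Lemma mem_sched k v p : (p \in sched k v) = adj v p.1.
Proof. by rewrite (perm_mem (VS k v)) mem_filter mem_enum andbT. Qed.

Lemma init_J v : Jv v (init R v).
Proof.
split => /=.
- by move=> t x; rewrite inE.
- by move=> t tv; rewrite eqxx (negbTE tv) big_set0.
- by rewrite eqxx.
- move=> t d; case: eqP => // -> [<-]; by rewrite dist_self.
Qed.

Lemma run_J k : forall v, Jv v (run k v).
Proof.
elim: k => [|k IH] v; first exact: init_J.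
apply: pm_J => //; first by move=> u t d; case: (IH u) => _ _ _; apply.
by move=> p; rewrite mem_sched.
Qed.

Lemma run_InvD k : InvD (run k).
Proof. by move=> u t d; case: (run_J k u) => _ _ _; apply. Qed.

Lemma run_UB m : forall v t p, spath adj v t p -> (size p <= m)%N ->
  dle (Dv (run m v) t) (Some (plen w v p)).
Proof.
elim: m => [|m IH] v t p sp.
  case: p sp => // /and3P[_ /eqP /= <- _] _ /=.
  by rewrite eqxx.
case: p sp => [|x q] sp hs.
  apply: dle_trans (pm_Dmono _ _ _ _ _) _; exact: IH.
move: sp => /and3P[/= /andP[avx pq] lq /andP[vq uq]].
have sq : spath adj x t q by rewrite /spath pq lq /= uq.
have xm : (x, t) \in sched m v by rewrite mem_sched.
have hh := (@pm_Dmsg (run m) v (run m v) (sched m v) x t xm).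
have := IH x t q sq hs; move: hh.
case: (Dv (pm (run m) v (run m v) (sched m v)) t) => [d1|] //=.
case: (Dv (run m x) t) => [d|] //= h1 h2.
  by rewrite (wsym x v) in h1; lra.
by case: (Dv (run m x) t).
Qed.

Lemma run_D m v t : (maxhop adj w v t <= m)%N -> Dv (run m v) t = Some (dist v t).
Proof.
move=> hm.
have [p sp] := ex_shortest G v t.
have /andP[spp /eqP pe] : spath adj v t p && (plen w v p == dist v t).
  by rewrite -shortestP.
have := run_UB spp (leq_trans (maxhop_ge sp) hm).
have := @run_InvD m v t.
case: (Dv (run m v) t) => //= d h1 h2.
by congr Some; apply/eqP; rewrite eq_le h1 // andbT -pe.
Qed.

Lemma run_phase m v t : v != t -> (maxhop adj w v t <= m)%N ->
  (forall x, (x \in NH (run m.+1 v) t) = isp t v x) /\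
  (forall x, adj v x -> Sv (run m.+1 v) x t = Sv (run m x) x t).
Proof.
move=> vt hm; split.
  have hp : forall x, isp t v x -> Dv (run m x) t = Some (dist x t).
    move=> x ix; apply: run_D.
    by have := maxhop_pred vt ix; move=> h; apply: leq_trans (ltnW h) hm.
  have ha : forall p, p \in sched m v -> adj v p.1 by move=> p; rewrite mem_sched.
  have [_ NN] := @pm_NH (run m) v (run m v) (sched m v) t (run_D hm) (@run_InvD m) hp ha.
  move=> x; rewrite NN; case: ifP => // /negbT; rewrite mem_sched /= => nax.
  case: (run_J m v) => J1 _ _ _.
  apply/idP/idP; first by move/J1; rewrite (negbTE nax).
  by rewrite /isp (negbTE nax).
move=> x avx.
have xv : x != v by apply/eqP => e; move: avx; rewrite e irr.
change (Sv (pm (run m) v (run m v) (sched m v)) x t = Sv (run m x) x t).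
by rewrite (@pm_S (run m) v (run m v) (sched m v) x t xv) mem_sched /= avx.
Qed.

Lemma run_sigma k : forall v t, (maxhop adj w v t < k)%N ->
  Sv (run k v) v t = (sigma adj w v t)%:R.
Proof.
elim: k => [|k IH] v t // hk.
case: (eqVneq v t) => [<-|vt].
  by case: (run_J k.+1 v) => _ _ -> _; rewrite sigma_self.
have [N1 S1] := run_phase vt hk.
case: (run_J k.+1 v) => _ J2 _ _.
rewrite J2 1?eq_sym // (sigma_rec G vt) natr_sum.
apply: eq_big => [x|x]; first by rewrite N1.
rewrite N1 => ix.
rewrite S1; last by case/andP: ix.
apply: IH; apply: leq_trans (maxhop_pred vt ix) hk.
Qed.

End Alg.

Unset Implicit Arguments.

Theorem lemma3 (V : finType) (R : realFieldType) (adj : rel V)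
  (w : V -> V -> R) (sched : nat -> V -> seq (V * V)) :
  weighted_graph adj w ->
  valid_schedule adj sched ->
  forall (k j : nat) (v t : V),
    (hopdiam adj w + 1 <= k)%N ->
    Sv (state_at w sched k j v) v t = (sigma adj w v t)%:R.
Proof.
move=> G VS k j v t hk.
rewrite /state_at.
set ms := take j (sched k v).
have ha : forall p, p \in ms -> adj v p.1.
  by move=> p /mem_take; rewrite (mem_sched VS).
have J := pm_J (run_J G VS k v) (@run_InvD _ _ _ _ G _ VS k) ha.
case: (eqVneq v t) => [<-|vt].
  by case: J => _ _ -> _; rewrite (sigma_self G).
case: k hk ms ha J => [|k] hk; first by rewrite addn1 in hk.
move=> ms ha J.
have hd : (maxhop adj w v t <= k)%N.
  rewrite addn1 ltnS in hk; exact: leq_trans (maxhop_diam adj w v t) hk.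
have [N1 S1] := run_phase G VS vt hd.
have hp : forall x, isp G t v x -> Dv (run w sched k.+1 x) t = Some (dist G x t).
  move=> x ix; apply: (run_D G VS); apply: leq_trans (ltnW (maxhop_pred vt ix)) _.
  exact: leq_trans hd _.
have [_ NN] := pm_NH (run_D G VS (leq_trans hd (leqnSn _))) (@run_InvD _ _ _ _ G _ VS k.+1) hp ha.
case: J => _ J2 _ _.
rewrite J2 1?eq_sym // (sigma_rec G vt) natr_sum.
apply: eq_big => [x|x]; first by rewrite NN N1; case: ifP.
rewrite NN => ix.
have isx : isp G t v x by move: ix; rewrite N1; case: ifP.
have avx : adj v x by case/andP: isx.
have xv : x != v by apply/eqP => e; move: avx; rewrite e; case: (G) => ->.
have hx : (maxhop adj w x t < k)%N := leq_trans (maxhop_pred vt isx) hd.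
rewrite pm_S //; case: ifP => _.
  by apply: (run_sigma G VS); apply: leq_trans hx _.
rewrite S1 //; exact: (run_sigma G VS).
Qed.
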